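(* Let $N\ge1$, $M=2^N$, let $\mathcal{A}=\{a_0,\dots,a_{M-1}\}\subset\mathbb{C}$ be a constellation with any labelling, and let $S\subseteq\{0,\dots,N-1\}$. Let $\mathcal{M}'_S=\{i:\ b_l(i)=0\ \text{for all } l\in\{0,\dots,N-1\}\setminus S\}$. Suppose the points $\{a_i: i\in\mathcal{M}'_S\}$ form a family of rectangles (each with four of these points as vertices, together covering all of them) such that no two rectangles share a vertex, and in each rectangle the labels of one diagonal pair both contain an odd number of $0$s while the labels of the other diagonal pair both contain an even number of $0$s (in their $N$-bit binary representations). Then for all $y,h\in\mathbb{C}$, with $d_i=|y-ha_i|^2$, the coefficient $\bar d_S$ of the monomial $\prod_{n\in S}z_n$ in the associated pseudo-Boolean function $f$ is zero.
   Context: For $i\in\{0,\dots,M-1\}$ write its $N$-bit binary representation as $b_0(i)\cdots b_{N-1}(i)$ with $b_0$ the most significant bit; this is the label of $a_i$. Given $d_0,\dots,d_{M-1}$, define $f(z_0,\dots,z_{N-1})=\sum_{i}d_i\prod_{n=0}^{N-1}B_{i,n}(z_n)$, $z_n\in\{0,1\}$, with $B_{i,n}(z)=z$ if $b_n(i)=1$ and $1-z$ if $b_n(i)=0$. Its multilinear expansion is $f=\sum_{S}\bar d_S\prod_{n\in S}z_n$ with $\bar d_S=\sum_{i\in\mathcal{M}'_S}d_i\prod_{n\in S}(-1)^{1-b_n(i)}$. *)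

(* Defs.v *)
(* Complex numbers: an arbitrary numClosedFieldType C
   (this covers C = R[i] for R : realType, i.e. the complex numbers). *)
From HB Require Import structures.
From mathcomp Require Import all_boot all_order all_algebra.
Set Implicit Arguments. Unset Strict Implicit. Unset Printing Implicit Defensive.
Import Order.TTheory GRing.Theory Num.Theory.
Local Open Scope ring_scope.

(* b_n(i): bit n of the N-bit binary label of i, b_0 = most significant bit *)
Definition label_bit (N : nat) (i : nat) (n : 'I_N) : bool :=
  odd (i %/ 2 ^ (N.-1 - n)).

Definition nzeros (N : nat) (i : nat) : nat :=
  #|[set n : 'I_N | ~~ label_bit i n]|.

Definition Mprime (N : nat) (S : {set 'I_N}) : {set 'I_(2 ^ N)} :=
  [set i : 'I_(2 ^ N) | [forall l : 'I_N, (l \notin S) ==> ~~ label_bit i l]].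

Definition dbar (C : pzRingType) (N : nat) (d : 'I_(2 ^ N) -> C) (S : {set 'I_N}) : C :=
  \sum_(i in Mprime S) d i * \prod_(n in S) (-1) ^+ (1 - label_bit i n).

Definition perp (C : numClosedFieldType) (u v : C) : Prop := 'Re (u * v^*) = 0.

Definition is_rectangle (C : numClosedFieldType) (p0 p1 p2 p3 : C) : Prop :=
  uniq [:: p0; p1; p2; p3] /\
  perp (p1 - p0) (p3 - p0) /\ perp (p2 - p1) (p0 - p1) /\
  perp (p3 - p2) (p1 - p2) /\ perp (p0 - p3) (p2 - p3).

(* a rectangle given by four labels (indices), in cyclic order *)
Definition quad (M : nat) : Type := (('I_M * 'I_M) * ('I_M * 'I_M))%type.
Definition qverts (M : nat) (q : quad M) : seq 'I_M :=
  [:: q.1.1; q.1.2; q.2.1; q.2.2].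

Definition rect_family (C : numClosedFieldType) (N : nat) (a : 'I_(2 ^ N) -> C)
    (S : {set 'I_N}) (F : {set quad (2 ^ N)}) : Prop :=
  [/\ (forall q, q \in F -> {subset qverts q <= Mprime S}),
      (forall q, q \in F ->
         is_rectangle (a q.1.1) (a q.1.2) (a q.2.1) (a q.2.2)),
      (forall q, q \in F ->
         let: ((i0, i1), (i2, i3)) := q in
         (odd (nzeros N i0) && odd (nzeros N i2) &&
          ~~ odd (nzeros N i1) && ~~ odd (nzeros N i3)) \/
         (~~ odd (nzeros N i0) && ~~ odd (nzeros N i2) &&
          odd (nzeros N i1) && odd (nzeros N i3))),
      (forall i, i \in Mprime S -> exists2 q, q \in F & i \in qverts q)
    & (forall q q', q \in F -> q' \in F -> q != q' ->
         forall i, i \in qverts q -> i \notin qverts q')].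

(* Main.v *)
Require Import Defs.
From HB Require Import structures.
From mathcomp Require Import all_boot all_order all_algebra.
From mathcomp Require Import ring.
Import Order.TTheory GRing.Theory Num.Theory.
Local Open Scope ring_scope.

Lemma perpE (C : numClosedFieldType) (u v : C) : perp u v -> u * v^* + u^* * v = 0.
Proof.
rewrite /perp ReE rmorphM /= (conjCK v) => /eqP.
rewrite mulf_eq0 invr_eq0 pnatr_eq0 orbF => /eqP.
by rewrite [u^* * v]mulrC.
Qed.

Lemma rect_par (C : numClosedFieldType) (p0 p1 p2 p3 : C) :
  is_rectangle p0 p1 p2 p3 ->
  p2 = p1 + p3 - p0 /\ (p1 - p0) * (p3 - p0)^* + (p1 - p0)^* * (p3 - p0) = 0.
Proof.
move=> [Hu [/perpE A [/perpE B [/perpE Cc _]]]].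
split; last exact: A.
move: Hu; rewrite /= !inE !negb_or => /and4P[/and3P[h01 _ _] /andP[h12 _] _ _].
have [u e1] : exists u, p1 = p0 + u by exists (p1 - p0); ring.
have [w e2] : exists w, p2 = p0 + u + w by exists (p2 - p0 - u); ring.
have [v e3] : exists v, p3 = p0 + v by exists (p3 - p0); ring.
subst p1 p2 p3.
have hu : u != 0 by apply: contraNneq h01 => ->; rewrite addr0.
have hw : w != 0 by apply: contraNneq h12 => ->; rewrite addr0.
have q1 : forall x y : C, x + y - x = y by move=> x y; ring.
have q2 : p0 + u + w - (p0 + u) = w by ring.
have q3 : p0 - (p0 + u) = - u by ring.
have q4 : p0 + v - (p0 + u + w) = v - u - w by ring.
have q5 : p0 + u - (p0 + u + w) = - w by ring.
rewrite q1 in A; rewrite q2 q3 in B; rewrite q4 q5 in Cc.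
rewrite !rmorphB !rmorphN /= in B Cc.
have B' : w * u^* + w^* * u = 0.
  by apply/eqP; rewrite -oppr_eq0; apply/eqP; rewrite -B; ring.
have huu : u * u^* != 0 by rewrite mulf_eq0 negb_or hu conjC_eq0.
have R : v * w^* = v^* * w.
  apply: (mulIf huu).
  have f1 : v * u^* = - (v^* * u).
    by apply/eqP; rewrite -subr_eq0; apply/eqP; rewrite -A; ring.
  have f2 : u * w^* = - (u^* * w).
    by apply/eqP; rewrite -subr_eq0; apply/eqP; rewrite -B'; ring.
  transitivity ((v * u^*) * (u * w^*)); first by ring.
  by rewrite f1 f2; ring.
have : (v - w) * w^* = 0.
  suff : 2%:R * ((v - w) * w^*) = 0 by move/eqP; rewrite mulf_eq0 pnatr_eq0 /= => /eqP.
  transitivity (- ((v - u - w) * (- w^*) + (v^* - u^* - w^*) * (- w)) + (v * w^* - v^* * w) + (w * u^* + w^* * u)); first by ring.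
  by rewrite Cc R B'; ring.
move/eqP; rewrite mulf_eq0 conjC_eq0 (negbTE hw) orbF subr_eq0 => /eqP ->.
ring.
Qed.

Lemma sign_prod (C : numClosedFieldType) (N : nat) (S : {set 'I_N}) (i : 'I_(2 ^ N)) :
  i \in Mprime S ->
  \prod_(n in S) (-1) ^+ (1 - label_bit i n) =
    (-1) ^+ #|[pred n | n \notin S]| * (-1) ^+ (nzeros N i) :> C.
Proof.
rewrite inE => /forallP Hi.
set s := (-1) ^+ #|[pred n | n \notin S]| : C.
have full : \prod_(n : 'I_N) (-1) ^+ (1 - label_bit i n) = (-1) ^+ (nzeros N i) :> C.
  rewrite prodrXr /nzeros -sum1_card; congr (_ ^+ _).
  rewrite [in RHS]big_mkcond /=.
  by apply: eq_bigr => n _; rewrite inE; case: (label_bit i n).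
have hs : s * s = 1 by rewrite /s -exprD -signr_odd addnn odd_double.
rewrite -full [in RHS](bigID (fun n => n \in S)) /=.
have -> : \prod_(n | n \notin S) (-1) ^+ (1 - label_bit i n) = s :> C.
  rewrite /s -prodr_const; apply: eq_bigr => n nS.
  by have := Hi n; rewrite nS /= => /negbTE ->.
by rewrite mulrCA hs mulr1.
Qed.

Theorem corollary2 (C : numClosedFieldType) (N : nat) (hN : (1 <= N)%N)
    (a : 'I_(2 ^ N) -> C) (S : {set 'I_N}) (F : {set quad (2 ^ N)}) :
  rect_family a S F ->
  forall y h : C, dbar (fun i => `|y - h * a i| ^+ 2) S = 0.
Proof.
move=> [Hsub Hrect Hpar Hcov Hdisj] y h.
rewrite /dbar.
under eq_bigr => i Hi do rewrite (@sign_prod C _ _ _ Hi) mulrCA.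
rewrite -mulr_sumr.
set g := fun i : 'I_(2 ^ N) => `|y - h * a i| ^+ 2 * (-1) ^+ nzeros N i.
suff -> : \sum_(i in Mprime S) g i = 0 by rewrite mulr0.
pose G q := if q \in F then [set x in qverts q] else set0.
have eM : Mprime S = \bigcup_q G q.
  apply/setP => i; apply/idP/bigcupP.
    move=> /Hcov[q qF iq]; exists q => //; rewrite /G qF inE //.
  move=> [q _]; rewrite /G; case: ifP => qF; last by rewrite inE.
  by rewrite inE => /(Hsub q qF).
rewrite eM partition_disjoint_bigcup; last first.
  move=> q q' nq; rewrite -setI_eq0; apply/eqP/setP => x; rewrite /G in_setI in_set0.
  case: ifP => qF; case: ifP => q'F; rewrite ?in_set0 ?andbF //= !in_set.
  apply/negbTE; rewrite negb_and; case xq: (x \in qverts q) => //=.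
  exact: Hdisj xq.
apply: big1 => q _; rewrite /G; case: ifP => qF; last by rewrite big_set0.
have uq : uniq (qverts q).
  by apply: (@map_uniq _ _ a); case: (Hrect q qF).
rewrite (eq_bigl (mem (qverts q))) => [|x]; last by rewrite inE.
rewrite -big_uniq //.
have [e2 E] := @rect_par C _ _ _ _ (Hrect q qF).
have P := Hpar q qF.
move: q P e2 E {qF uq} => [[i0 i1] [i2 i3]] /= P e2 E.
rewrite !big_cons big_nil /g -!(signr_odd _ (nzeros N _)).
rewrite !normCK !rmorphB !rmorphM /= e2 !rmorphB !rmorphD /=.
rewrite !rmorphB /= in E.
set E0 := _ + _ in E.
case: P => /andP[/andP[/andP[h0 h2] h1] h3]; rewrite ?h0 ?h1 ?h2 ?h3 ?(negbTE h0) ?(negbTE h1) ?(negbTE h2) ?(negbTE h3) /= ?expr0 ?expr1.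
  transitivity (- (h * h^* * E0)); first by rewrite /E0; ring.
  by rewrite E mulr0 oppr0.
transitivity (h * h^* * E0); first by rewrite /E0; ring.
by rewrite E mulr0.
Qed.
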